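(* For every positive integer $m$, let $\mathcal{G}^{r}_m$ be the set of all directed acyclic graphs on the labeled vertex set $[m]=\{1,\dots,m\}$ whose Markov equivalence class has exactly one element. Then $$2^{\frac{m(m-3)}{2}+1}\le |\mathcal{G}^{r}_m|\le m!\,2^{\frac{m(m-1)}{2}},$$ and in particular $\log|\mathcal{G}^{r}_m|\ge \left(\frac{m(m-3)}{2}+1\right)\log 2$.
   Context: Two DAGs on the same vertex set are Markov equivalent if they encode exactly the same conditional independence statements among the associated random variables (equivalently, they have the same skeleton and the same v-structures). The Markov equivalence class of $G$ is the set of DAGs Markov equivalent to $G$. *)

(* Defs.v *)
From mathcomp Require Import all_boot.
Set Implicit Arguments. Unset Strict Implicit. Unset Printing Implicit Defensive.

(* A directed graph on the vertex set 'I_m (= {0,...,m-1}, a relabelling of [m])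
   is given by its set of arcs: (x, y) \in G means x -> y. *)
Definition digraph (m : nat) := {set 'I_m * 'I_m}.

Definition arc m (G : digraph m) : rel 'I_m := fun x y => (x, y) \in G.

(* Acyclic: there is no directed cycle x -> y ->* x (this also excludes loops). *)
Definition is_dag m (G : digraph m) : bool :=
  [forall x : 'I_m, forall y : 'I_m, arc G x y ==> ~~ connect (arc G) y x].

Definition adjacent m (G : digraph m) (x y : 'I_m) : bool := arc G x y || arc G y x.

Definition vstruct m (G : digraph m) (a b c : 'I_m) : bool :=
  [&& arc G a b, arc G c b, a != c & ~~ adjacent G a c].

(* Markov equivalence, via the (Verma--Pearl) characterization given in the
   context: same skeleton and same v-structures. *)
Definition markov_equiv m (G H : digraph m) : bool :=
  [forall x : 'I_m, forall y : 'I_m, adjacent G x y == adjacent H x y] &&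
  [forall a : 'I_m, forall b : 'I_m, forall c : 'I_m,
      vstruct G a b c == vstruct H a b c].

Definition mec m (G : digraph m) : {set digraph m} :=
  [set H : digraph m | is_dag H && markov_equiv G H].

Definition Gr (m : nat) : {set digraph m} :=
  [set G : digraph m | is_dag G && (#|mec G| == 1)].

(* Main.v *)
Require Import Defs.
From mathcomp Require Import all_boot perm zify.
Require Import Defs.
Set Implicit Arguments. Unset Strict Implicit. Unset Printing Implicit Defensive.

Lemma sum_ind_pairs m j k : j <= m ->
  \sum_(i < m) ((k <= i) && (i < j) : nat) = j - k.
Proof.
elim: m j => [|m IH] j hj.
  by rewrite big_ord0; move: hj; rewrite leqn0 => /eqP ->.
rewrite big_ord_recr /=.
case: (leqP j m) => hjm.
- by rewrite IH // andbF addn0.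
- have ej : j = m.+1 by apply/eqP; rewrite eqn_leq hj hjm.
  subst j. rewrite andbT.
  rewrite (eq_bigr (fun i : 'I_m => ((k <= i) && (i < m) : nat))); last first.
    by move=> i _; rewrite (ltn_ord i) ltnS (ltnW (ltn_ord i)).
  rewrite IH //. case: (leqP k m) => hk /=; lia.
Qed.

Lemma card_pairs m k :
  #|[set p : 'I_m * 'I_m | (k <= p.1) && (p.1 < p.2)]| = \sum_(j < m) (j - k).
Proof.
rewrite -sum1_card big_mkcond /=.
rewrite (eq_bigr (fun p : 'I_m * 'I_m => ((k <= p.1) && (p.1 < p.2) : nat))); last first.
  by move=> p _; rewrite inE; case: ifP.
rewrite -(pair_big xpredT xpredT (fun i j : 'I_m => ((k <= i) && (i < j) : nat))) /=.
rewrite exchange_big /=.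
apply: eq_bigr => j _.
exact: sum_ind_pairs (ltnW (ltn_ord j)).
Qed.

Lemma tri m k : \sum_(j < m) (j - k) = 'C(m - k, 2).
Proof.
elim: m => [|m IH]; first by rewrite big_ord0.
rewrite big_ord_recr /= IH.
case: (leqP k m) => hk.
  by rewrite subSn // binS bin1.
have -> : m - k = 0 by lia.
have -> : m.+1 - k = 0 by lia.
by [].
Qed.

Lemma bin2E n : 'C(n, 2) = (n * n.-1) %/ 2.
Proof. by rewrite bin2 divn2. Qed.

Lemma fw_connect m (G : digraph m) :
  (forall x y, arc G x y -> x < y) -> forall x y, connect (arc G) x y -> x <= y.
Proof.
move=> fw x y /connectP [p]; elim: p x => [|z p IH] x /=; first by move=> _ ->.
by move=> /andP[a pth] e; exact: leq_trans (ltnW (fw _ _ a)) (IH z pth e).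
Qed.

Lemma fw_dag m (G : digraph m) : (forall x y, arc G x y -> x < y) -> is_dag G.
Proof.
move=> fw; apply/forallP => x; apply/forallP => y; apply/implyP => a.
apply/negP => /(fw_connect fw) h; have := fw _ _ a; lia.
Qed.

Lemma meas_lt m x y x' y' : x < m -> x' < m ->
  (y' < y) || ((y' == y) && (x < x')) -> y' * m + (m - x') < y * m + (m - x).
Proof.
move=> hx hx' /orP[h|/andP[/eqP -> h]]; last by lia.
have : y'.+1 * m <= y * m by rewrite leq_mul2r h orbT.
rewrite mulSn. lia.
Qed.

Section Uniq.
Variables (m : nat) (G H : digraph m).
Hypothesis fw : forall x y, arc G x y -> x < y.
Hypothesis dagH : is_dag H.
Hypothesis eqv : markov_equiv G H.
Hypothesis prot : forall x y, arc G x y ->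
  [\/ exists z, arc G z x && ~~ adjacent G z y,
      exists z, vstruct G x y z
    | exists z, arc G x z && arc G z y].

Lemma adjE x y : adjacent G x y = adjacent H x y.
Proof. by case/andP: eqv => /forallP /(_ x) /forallP /(_ y) /eqP. Qed.

Lemma vsE a b c : vstruct G a b c = vstruct H a b c.
Proof.
by case/andP: eqv => _ /forallP /(_ a) /forallP /(_ b) /forallP /(_ c) /eqP.
Qed.

Lemma dagH' x y : arc H x y -> ~~ connect (arc H) y x.
Proof. by move: dagH => /forallP /(_ x) /forallP /(_ y) /implyP. Qed.

Lemma noflip x y : arc G x y -> ~~ arc H y x.
Proof.
suff: forall k (x y : 'I_m), y * m + (m - x) < k -> arc G x y -> ~~ arc H y x.
  by move=> /(_ (y * m + (m - x)).+1 x y (ltnSn _)).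
elim=> [//|k IH] {}x {}y lt a; apply/negP => hyx.
have xy := fw a.
case: (prot a) => [[z /andP[azx nzy]] | [z v] | [z /andP[axz azy]]].
- have hzx : arc H z x.
    have : adjacent H z x by rewrite -adjE /adjacent azx.
    case/orP => // hxz; exfalso.
    have lt' : x * m + (m - z) < k.
      have := @meas_lt m x y z x (ltn_ord x) (ltn_ord z); rewrite xy => /(_ isT); lia.
    by have := IH z x lt' azx; rewrite hxz.
  have zy : z != y.
    apply/eqP => ezy; subst z; have := fw azx; lia.
  have : vstruct H z x y.
    by rewrite /vstruct hzx hyx zy -adjE nzy.
  rewrite -vsE => /and4P[_ ayx _ _]; have := fw ayx; lia.
- have : vstruct H x y z by rewrite -vsE.
  case/and4P => axy _ _ _.
  by have := dagH' axy; rewrite (connect1 hyx).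
- have zy := fw azy; have xz := fw axz.
  have hxz : arc H x z.
    have : adjacent H x z by rewrite -adjE /adjacent axz.
    case/orP => // hzx; exfalso.
    have lt' : z * m + (m - x) < k.
      have := @meas_lt m x y x z (ltn_ord x) (ltn_ord x); rewrite zy => /(_ isT); lia.
    by have := IH x z lt' axz; rewrite hzx.
  have hzy : arc H z y.
    have : adjacent H z y by rewrite -adjE /adjacent azy.
    case/orP => // hyz; exfalso.
    have lt' : y * m + (m - z) < k.
      have := @meas_lt m x y z y (ltn_ord x) (ltn_ord z); rewrite eqxx xz orbT => /(_ isT); lia.
    by have := IH z y lt' azy; rewrite hyz.
  have := dagH' hxz.
  by rewrite (connect_trans (connect1 hzy) (connect1 hyx)).
Qed.

Lemma uniq_eq : H = G.
Proof.
apply/setP => -[x y].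
have e : arc H x y = arc G x y.
  case ag: (arc G x y).
    have : adjacent H x y by rewrite -adjE /adjacent ag.
    case/orP => // hyx; by have := noflip ag; rewrite hyx.
  apply/negbTE/negP => hxy.
  have : adjacent G x y by rewrite adjE /adjacent hxy.
  rewrite /adjacent ag /= => ayx.
  by have := noflip ayx; rewrite hxy.
exact: e.
Qed.

End Uniq.

Section Low.
Variable n : nat.
Notation V := 'I_n.+1.

Fixpoint levf (S : {set V * V}) (k : nat) (j : V) : nat :=
  if k is k'.+1 then \max_(i | (i, j) \in S) (levf S k' i).+1 else 0.

Definition Pset : {set V * V} := [set p : V * V | (1 <= p.1) && (p.1 < p.2)].

Variable S : {set V * V}.
Hypothesis hS : S \subset Pset.

Lemma Sfw i j : (i, j) \in S -> (0 < i) && (i < j).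
Proof. by move=> /(subsetP hS); rewrite inE. Qed.

Lemma levfE N : forall (j : V), j < N -> forall k k', j < k -> j < k' ->
  levf S k j = levf S k' j.
Proof.
elim: N => [//|N IH] j hj [|k] [|k'] //= hk hk'.
apply: eq_bigr => i /Sfw /andP[_ ij].
congr _.+1; apply: IH; lia.
Qed.

Definition lev j := levf S n.+1 j.

Lemma levE j : lev j = \max_(i | (i, j) \in S) (lev i).+1.
Proof.
rewrite {1}/lev -[levf S n.+1 j]/(\max_(i | (i, j) \in S) (levf S n i).+1).
apply: eq_bigr => i /Sfw /andP[_ ij].
congr _.+1; apply: (@levfE n.+1 i); have := ltn_ord j; lia.
Qed.

Lemma lev_lt i j : (i, j) \in S -> lev i < lev j.
Proof. by move=> h; rewrite (levE j); exact: leq_bigmax_cond. Qed.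

Lemma lev_par j : 0 < lev j -> exists2 i, (i, j) \in S & (lev i).+1 = lev j.
Proof.
case: (pickP (fun i => (i, j) \in S)) => [i Hi | H0] hj.
  have c : 0 < #|(fun i => (i, j) \in S)|.
    by apply/card_gt0P; exists i.
  case: (eq_bigmax_cond (fun i => (lev i).+1) c) => i0 Hi0 e.
  by exists i0 => //; rewrite (levE j) e.
by move: hj; rewrite levE big_pred0.
Qed.

Lemma lev0 : lev ord0 = 0.
Proof.
rewrite levE big_pred0 // => i; apply/negbTE/negP => /Sfw /andP[_]; by rewrite ltn0.
Qed.

Definition GS : digraph n.+1 := S :|: [set p : V * V | (p.1 == ord0) && odd (lev p.2)].

Lemma arcGS x y : arc GS x y = ((x, y) \in S) || ((x == ord0) && odd (lev y)).
Proof. by rewrite /arc /GS !inE. Qed.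

Lemma GSfw x y : arc GS x y -> x < y.
Proof.
rewrite arcGS => /orP[/Sfw /andP[] // | /andP[/eqP -> oy]].
rewrite /=; case: (posnP y) => // y0.
have ey : y = ord0 by apply/val_inj.
by move: oy; rewrite ey lev0.
Qed.

Lemma arc_to0 (x : V) : arc GS x ord0 = false.
Proof. by apply/negbTE/negP => /GSfw. Qed.

Lemma arc_from0 (y : V) : 0 < y -> arc GS ord0 y = odd (lev y).
Proof.
move=> y0; rewrite arcGS eqxx /=.
by case: ((ord0, y) \in S) /idP => // /Sfw.
Qed.

Lemma protGS x y : arc GS x y ->
  [\/ exists z, arc GS z x && ~~ adjacent GS z y,
      exists z, vstruct GS x y z
    | exists z, arc GS x z && arc GS z y].
Proof.
have SG : forall i j, (i, j) \in S -> arc GS i j by move=> i j h; rewrite arcGS h.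
move=> axy; move: (axy); rewrite arcGS => /orP[Sxy | /andP[/eqP x0 oy]].
- have ltxy := lev_lt Sxy.
  have /andP[x_pos xy] := Sfw Sxy.
  have y_pos : 0 < y by lia.
  case Ej: (odd (lev y)); case Ei: (odd (lev x)).
  + case: (@lev_par y) => [|p Spy ep]; first lia.
    have /andP[p_pos _] := Sfw Spy.
    have px : lev x < lev p.
      have : lev x != lev p by apply/eqP => e; move: Ej; rewrite -ep -e /= Ei.
      lia.
    case Ha: (adjacent GS p x).
    * move: Ha; rewrite /adjacent => /orP[apx | axp].
        move: apx; rewrite arcGS => /orP[/lev_lt | /andP[/eqP p0 _]]; first lia.
        by move: p_pos; rewrite p0.
      by apply: Or33; exists p; rewrite axp SG.
    * apply: Or32; exists p; rewrite /vstruct axy SG //=.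
      have -> : (x != p) by apply/eqP => e; move: px; rewrite e; lia.
      by rewrite /adjacent orbC -/(adjacent GS p x) Ha.
  + apply: Or32; exists ord0; rewrite /vstruct axy arc_from0 // Ej /=.
    have -> : x != ord0 by apply/eqP => e; move: x_pos; rewrite e.
    by rewrite /adjacent arc_to0 arc_from0 // Ei.
  + apply: Or31; exists ord0; rewrite arc_from0 // Ei /=.
    by rewrite /adjacent arc_to0 arc_from0 // Ej.
  + case: (@lev_par y) => [|p Spy ep]; first lia.
    have /andP[p_pos _] := Sfw Spy.
    have px : lev x < lev p.
      have : lev x != lev p by apply/eqP => e; move: Ej; rewrite -ep -e /= Ei.
      lia.
    case Ha: (adjacent GS p x).
    * move: Ha; rewrite /adjacent => /orP[apx | axp].
        move: apx; rewrite arcGS => /orP[/lev_lt | /andP[/eqP p0 _]]; first lia.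
        by move: p_pos; rewrite p0.
      by apply: Or33; exists p; rewrite axp SG.
    * apply: Or32; exists p; rewrite /vstruct axy SG //=.
      have -> : (x != p) by apply/eqP => e; move: px; rewrite e; lia.
      by rewrite /adjacent orbC -/(adjacent GS p x) Ha.
- subst x.
  case: (@lev_par y) => [|p Spy ep].
    by move: oy; case: (lev y).
  have /andP[p_pos _] := Sfw Spy.
  have op : odd (lev p) = false by move: oy; rewrite -ep /= => /negbTE.
  apply: Or32; exists p; rewrite /vstruct axy SG //=.
  have -> : (ord0 != p) by apply/eqP => e; move: p_pos; rewrite -e.
  by rewrite /adjacent arc_to0 arc_from0 // op.
Qed.

Lemma GS_in_Gr : GS \in Gr n.+1.
Proof.
have dag := fw_dag GSfw.
rewrite inE dag /=.
have -> : mec GS = [set GS].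
  apply/setP => H; rewrite !inE; apply/andP/eqP.
    case=> dH eqv; exact: (uniq_eq GSfw dH eqv protGS).
  move=> ->; split => //; rewrite /markov_equiv.
  apply/andP; split; apply/forallP => a; apply/forallP => b //.
  by apply/forallP => c.
by rewrite cards1.
Qed.

Lemma GS_P : GS :&: Pset = S.
Proof.
apply/setP => -[x y]; rewrite !inE /=.
case Sxy: ((x, y) \in S).
  by have := Sfw Sxy.
case: (x =P ord0) => [->|_] /=; last by [].
by rewrite andbF.
Qed.

End Low.

Section Up.
Variable m : nat.
Implicit Types G : digraph m.

Definition hh G x := #|[set y | connect (arc G) y x]|.

Lemma hh_lt G x y : is_dag G -> arc G x y -> hh G x < hh G y.
Proof.
move=> dG a; apply: proper_card; apply/properP; split.
  apply/subsetP => z; rewrite !inE => c.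
  exact: connect_trans c (connect1 a).
exists y; first by rewrite inE connect0.
rewrite inE; move: dG => /forallP /(_ x) /forallP /(_ y) /implyP; exact.
Qed.

Definition klt G (x y : 'I_m) := (hh G x < hh G y) || ((hh G x == hh G y) && (x < y)).

Definition rk G x := #|[set y | klt G y x]|.

Lemma klt_irr G x : klt G x x = false.
Proof. by rewrite /klt ltnn eqxx ltnn. Qed.

Lemma klt_trans G x y z : klt G x y -> klt G y z -> klt G x z.
Proof.
rewrite /klt => /orP[h1|/andP[/eqP e1 h1]] /orP[h2|/andP[/eqP e2 h2]].
- by rewrite (ltn_trans h1 h2).
- by rewrite -e2 h1.
- by rewrite e1 h2.
- by rewrite e1 e2 eqxx (ltn_trans h1 h2) orbT.
Qed.

Lemma klt_total G x y : x != y -> klt G x y || klt G y x.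
Proof.
move=> nxy; rewrite /klt.
have : (x : nat) != y by apply: contra nxy => /eqP /val_inj ->.
lia.
Qed.

Lemma rk_lt G x y : klt G x y -> rk G x < rk G y.
Proof.
move=> h; apply: proper_card; apply/properP; split.
  apply/subsetP => z; rewrite !inE => c; exact: klt_trans c h.
by exists x; rewrite inE ?h // klt_irr.
Qed.

Lemma rk_bound G x : rk G x < m.
Proof.
rewrite -[m]card_ord -cardsT; apply: proper_card; apply/properP; split.
  exact: subsetT.
by exists x; rewrite !inE // klt_irr.
Qed.

Definition rko G x : 'I_m := Ordinal (rk_bound G x).

Lemma rko_inj G : injective (rko G).
Proof.
move=> x y e; apply/eqP; apply/negP => /negP nxy.
have e' : rk G x = rk G y by move: e => /(congr1 val).
case/orP: (klt_total G nxy) => /(rk_lt) ; rewrite e' ltnn //.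
Qed.

Definition sig G : {perm 'I_m} := perm (@rko_inj G).

Lemma sig_lt G x y : is_dag G -> arc G x y -> sig G x < sig G y.
Proof.
move=> dG a; rewrite !permE /=; apply: rk_lt.
by rewrite /klt (hh_lt dG a).
Qed.

Definition enc2 G (s : {perm 'I_m}) : {set 'I_m * 'I_m} :=
  [set p | ((s^-1)%g p.1, (s^-1)%g p.2) \in G].

Lemma enc2E G (s : {perm 'I_m}) (x y : 'I_m) : ((s x, s y) \in enc2 G s) = ((x, y) \in G).
Proof. by rewrite inE /= !permK. Qed.

Definition enc G := (sig G, enc2 G (sig G)).

Definition Uset : {set 'I_m * 'I_m} := [set p : 'I_m * 'I_m | (0 <= p.1) && (p.1 < p.2)].

Lemma enc_inj : injective enc.
Proof.
move=> G1 G2 [e1 e2]; apply/setP => -[x y].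
by rewrite -(enc2E G1 (sig G1)) e2 e1 enc2E.
Qed.

Lemma enc_in G : is_dag G -> enc G \in setX [set: {perm 'I_m}] (powerset Uset).
Proof.
move=> dG; rewrite !inE /=; apply/subsetP => -[a b]; rewrite !inE /= => h.
have := sig_lt dG h; by rewrite !permKV.
Qed.

Lemma upper : #|Gr m| <= m`! * 2 ^ 'C(m, 2).
Proof.
rewrite -(card_in_imset (f := enc) (D := mem (Gr m))); last by move=> ? ? _ _; apply: enc_inj.
have -> : m`! * 2 ^ 'C(m, 2) = #|setX [set: {perm 'I_m}] (powerset Uset)|.
  by rewrite cardsX card_powerset cardsT card_Sn /Uset card_pairs tri subn0.
apply: subset_leq_card; apply/subsetP => _ /imsetP [G hG ->].
by apply: enc_in; move: hG; rewrite inE => /andP[].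
Qed.

End Up.

Lemma lower n : 2 ^ 'C(n, 2) <= #|Gr n.+1|.
Proof.
have -> : 'C(n, 2) = #|Pset n| by rewrite /Pset card_pairs tri subSS subn0.
rewrite -card_powerset.
rewrite -(card_in_imset (f := @GS n) (D := mem (powerset (Pset n)))); last first.
  move=> S1 S2; rewrite !inE => h1 h2 e.
  by rewrite -(GS_P h1) -(GS_P h2) e.
apply: subset_leq_card; apply/subsetP => _ /imsetP [S hS ->].
by apply: GS_in_Gr; move: hS; rewrite inE.
Qed.

Theorem lemma1 (m : nat) (hm : 0 < m) :
  2 ^ ((m.-1 * m.-2) %/ 2) <= #|Gr m| <= m`! * 2 ^ ((m * m.-1) %/ 2).
Proof.
case: m hm => [//|n] _.
rewrite -!bin2E /=; apply/andP; split; first exact: lower.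
exact: upper.
Qed.
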